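(* For all $m\in\mathbb N$, all $\epsilon\in(0,1)$ and all $c\in(0,1/5)$, $$\mathbb E_{\theta^\circ}P_{\vartheta^m|Y}\Big(\|\vartheta^m-\theta^\circ\|^2> b_m+3\bar\sigma_m+\tfrac32 m\,\sigma_{(m)}+4r_m\Big)\le 2\exp(-m/36),$$ $$\mathbb E_{\theta^\circ}P_{\vartheta^m|Y}\Big(\|\vartheta^m-\theta^\circ\|^2< b_m+\bar\sigma_m-4c\,(m\,\sigma_{(m)}+r_m)\Big)\le 2\exp(-c^2m/2).$$
   Context: Let $\ell^2$ be the space of square-summable real sequences with norm $\|\cdot\|$. Fix a bounded real sequence $\lambda=(\lambda_j)_{j\ge1}$ with $\lambda_j\ne0$ for all $j$, a noise level $\epsilon\in(0,1)$ and a true parameter $\theta^\circ\in\ell^2$. The data $Y=(Y_j)_{j\ge1}$ satisfy $Y_j=\lambda_j\theta^\circ_j+\sqrt\epsilon\,\xi_j$ with $\xi_j$ i.i.d. $N(0,1)$; $\mathbb E_{\theta^\circ}$, $P_{\theta^\circ}$ denote expectation and probability under this law. Fix prior means $\eta=(\eta_j)_{j\ge1}$ with $\theta^\circ-\eta\in\ell^2$ and prior variances $\tau_j\in(0,\infty)$ (possibly depending on $\epsilon$). For $m\in\mathbb N$ the sieve prior $P_{\vartheta^m}$ is the law of $\vartheta^m=(\vartheta^m_j)_{j\ge1}$ with independent coordinates, $\vartheta^m_j\sim N(\eta_j,\tau_j)$ for $j\le m$ and $\vartheta^m_j=\eta_j$ a.s. for $j>m$, in the model $Y_j=\lambda_j\vartheta^m_j+\sqrt\epsilon\xi_j$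 with $\vartheta^m$ independent of $(\xi_j)$. Put $\sigma_j:=(\lambda_j^2\epsilon^{-1}+\tau_j^{-1})^{-1}$ and $\theta^Y_j:=\sigma_j(\tau_j^{-1}\eta_j+\lambda_j\epsilon^{-1}Y_j)$. The posterior $P_{\vartheta^m|Y}$ makes the coordinates independent with $\vartheta^m_j\sim N(\theta^Y_j,\sigma_j)$ for $j\le m$ and $\vartheta^m_j=\eta_j$ for $j>m$; the Bayes estimator is $\hat\theta^m:=\mathbb E[\vartheta^m|Y]$, i.e. $\hat\theta^m_j=\theta^Y_j$ for $j\le m$, $\hat\theta^m_j=\eta_j$ for $j>m$. Define $b_m:=\sum_{j>m}(\theta^\circ_j-\eta_j)^2$, $\bar\sigma_m:=\sum_{j=1}^m\sigma_j$, $\sigma_{(m)}:=\max_{1\le j\le m}\sigma_j$, $r_m:=\sum_{j=1}^m\sigma_j^2\tau_j^{-2}(\eta_j-\theta^\circ_j)^2$. *)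

(* Defs.v *)
From HB Require Import structures.
From mathcomp Require Import all_boot all_order all_algebra.
From mathcomp Require Import all_classical all_reals all_analysis.
Set Implicit Arguments. Unset Strict Implicit. Unset Printing Implicit Defensive.
Import Order.TTheory GRing.Theory Num.Theory.
Import numFieldNormedType.Exports.
Local Open Scope classical_set_scope.
Local Open Scope ring_scope.

(* Sequences are indexed by nat starting at 0: the paper's coordinate j >= 1
   is our coordinate j-1; "j <= m" becomes "j < m". *)
Section Defs.
Variable R : realType.

Definition upd (x : nat -> R) (k : nat) (t : R) : nat -> R :=
  fun j => if j == k then t else x j.

(* Iterated integral of f against the product of the Gaussian laws
   N(mu j, s j ^ 2), j < k, on the coordinates j < k of x
   (coordinates >= k of x are kept fixed).  s j is the standard deviation. *)
Fixpoint gauss_iter (k : nat) (mu s : nat -> R)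
    (f : (nat -> R) -> \bar R) (x : nat -> R) : \bar R :=
  match k with
  | 0 => f x
  | k'.+1 => (\int[normal_prob (mu k') (s k')]_t
                 gauss_iter k' mu s f (upd x k' t))%E
  end.

Definition post_var (lam tau : nat -> R) (eps : R) (j : nat) : R :=
  (lam j ^+ 2 / eps + (tau j)^-1)^-1.

Definition post_mean (lam tau eta : nat -> R) (eps : R) (Y : nat -> R)
    (j : nat) : R :=
  post_var lam tau eps j * ((tau j)^-1 * eta j + lam j * eps^-1 * Y j).

Definition sieve (m : nat) (eta x : nat -> R) : nat -> R :=
  fun j => if (j < m)%N then x j else eta j.

Definition sqdist (u v : nat -> R) : \bar R :=
  (\sum_(0 <= j <oo) (((u j - v j) ^+ 2)%:E))%E.

(* b_m = sum_{j > m} (theta_j - eta_j)^2  (paper indexing) *)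
Definition bias (m : nat) (theta eta : nat -> R) : \bar R :=
  (\sum_(m <= j <oo) (((theta j - eta j) ^+ 2)%:E))%E.

Definition sigma_bar (m : nat) (lam tau : nat -> R) (eps : R) : R :=
  \sum_(j < m) post_var lam tau eps j.

Definition sigma_max (m : nat) (lam tau : nat -> R) (eps : R) : R :=
  \big[Num.max/0]_(j < m) post_var lam tau eps j.

Definition r_m (m : nat) (lam tau eta theta : nat -> R) (eps : R) : R :=
  \sum_(j < m) (post_var lam tau eps j ^+ 2 * (tau j)^-2 *
                (eta j - theta j) ^+ 2).

(* E_{theta0} P_{vartheta^m | Y}(||vartheta^m - theta0||^2 \in A):
   Y_j ~ N(lam_j theta0_j, eps) independent (only j < m enter the posterior),
   and, given Y, vartheta^m_j ~ N(theta^Y_j, sigma_j) independent for j < m,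
   vartheta^m_j = eta_j for j >= m. *)
Definition exp_post_prob (m : nat) (lam tau eta theta : nat -> R) (eps : R)
    (A : set (\bar R)) : \bar R :=
  gauss_iter m (fun j => lam j * theta j) (fun _ => Num.sqrt eps)
    (fun Y => gauss_iter m (post_mean lam tau eta eps Y)
                (fun j => Num.sqrt (post_var lam tau eps j))
                (fun x => (\1_A (sqdist (sieve m eta x) theta))%:E)
                (fun _ => 0))
    (fun _ => 0).

End Defs.

(* Main.v *)
Require Import Defs.
From HB Require Import structures.
From mathcomp Require Import all_boot all_order all_algebra.
From mathcomp Require Import all_classical all_reals all_analysis measurable_realfun.
From mathcomp Require Import ring lra.
Import Order.TTheory GRing.Theory Num.Theory.
Import numFieldNormedType.Exports.
Local Open Scope classical_set_scope.
Local Open Scope ring_scope.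

Section S.
Variable R : realType.

Lemma idt (w D u d : R) : D != 0 ->
  (1-D)*w*(u+d)^+2 - u^+2*w = (1-D)*w*d^+2/D - (u - (1-D)*d/D)^+2 * D * w.
Proof. by move=> D0; field. Qed.

Lemma gauss_exp_id (k c mu s t : R) : s != 0 -> 0 < 1 - 2 * k * s^+2 ->
  let D := 1 - 2 * k * s^+2 in
  let s' := s * (Num.sqrt D)^-1 in
  let mu' := mu + (1 - D) * (mu - c) / D in
  expR (k * (t - c)^+2) * normal_pdf mu s t =
  ((Num.sqrt D)^-1 * expR (k * (mu - c)^+2 / D)) * normal_pdf mu' s' t.
Proof.
move=> s0 D0 D s' mu'.
have sD : 0 < Num.sqrt D by rewrite sqrtr_gt0.
have s'0 : s' != 0 by rewrite mulf_neq0 // invr_eq0 gt_eqF.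
rewrite !normal_pdfE // /normal_peak /normal_fun.
have s'2 : s' ^+ 2 = s^+2 / D by rewrite /s' exprMn exprVn sqr_sqrtr // ltW.
have -> : Num.sqrt (s' ^+ 2 * pi *+ 2) = Num.sqrt (s ^+ 2 * pi *+ 2) / Num.sqrt D.
  have -> : s' ^+ 2 * pi *+ 2 = (s ^+ 2 * pi *+ 2) * D^-1 by rewrite s'2 mulrnAl mulrAC.
  rewrite sqrtrM ?sqrtrV // ?ltW //.
  by rewrite pmulrn_lgt0 // mulr_gt0 ?pi_gt0 // exprn_even_gt0.
have Dn0 : D != 0 by rewrite gt_eqF.
set P := Num.sqrt (s ^+ 2 * pi *+ 2).
set Q := Num.sqrt D.
have -> : expR (- (t - mu') ^+ 2 / (s' ^+ 2 *+ 2)) =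
   expR (k * (t - c)^+2 - (t - mu) ^+ 2 / (s ^+ 2 *+ 2) - k * (mu - c)^+2 / D).
  congr expR.
  set w := (s ^+ 2 *+ 2)^-1.
  have hk : k = (1 - D) * w.
    rewrite /w /D -mulr_natr; by field.
  have hs : (s' ^+ 2 *+ 2)^-1 = D * w.
    by rewrite s'2 /w -mulrnAl invfM invrK mulrC.
  rewrite hs hk.
  have -> : t - mu' = (t - mu) - (1 - D) * (mu - c) / D by rewrite /mu'; ring.
  have -> : t - c = (t - mu) + (mu - c) by ring.
  rewrite (idt w D (t - mu) (mu - c) Dn0).
  clearbody mu' s' w D.
  ring.
have Pn0 : P != 0.
  by rewrite gt_eqF // sqrtr_gt0 pmulrn_lgt0 // mulr_gt0 ?pi_gt0 // exprn_even_gt0.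
have Qn0 : Q != 0 by rewrite gt_eqF.
rewrite mulNr !expRD !expRN.
have En0 : expR (k * (mu - c) ^+ 2 / D) != 0 by rewrite gt_eqF ?expR_gt0.
move: En0; set E1 := expR (k * (mu - c) ^+ 2 / D) => En0.
set E2 := expR _. set E3 := expR _.
have E3n0 : E3 != 0 by rewrite /E3 gt_eqF ?expR_gt0.
clearbody P Q E1 E2 E3.
by field; rewrite Pn0 Qn0 En0 E3n0.
Qed.
Lemma integral_normal (m s : R) (f : R -> \bar R) :
  (forall x, 0 <= f x)%E -> measurable_fun setT f ->
  (\int[normal_prob m s]_x f x =
  \int[lebesgue_measure]_x (f x * (normal_pdf m s x)%:E))%E.
Proof.
move=> f0 mf.
have dom := normal_prob_dominates m s.
rewrite -(Radon_Nikodym_SigmaFinite.change_of_variables dom f0 measurableT mf).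
apply: ae_eq_integral => //.
- apply: emeasurable_funM => //.
  exact: measurable_int (Radon_Nikodym_SigmaFinite.f_integrable dom).
- apply: emeasurable_funM => //.
  by apply/measurable_EFinP; exact: measurable_normal_pdf.
- apply: ae_eqe_mul2l.
  apply: integral_ae_eq => //.
  + exact: Radon_Nikodym_SigmaFinite.f_integrable dom.
  + by apply/measurable_EFinP; exact: measurable_normal_pdf.
  + move=> E _ mE.
    by rewrite -Radon_Nikodym_SigmaFinite.f_integral.
Qed.

Lemma measurable_expsq (k c : R) :
  measurable_fun [set: R] (fun t : R => expR (k * (t - c) ^+ 2)).
Proof.
apply: measurableT_comp => //; apply: measurable_funM => //.
by apply: measurable_funX; apply: measurable_funB.
Qed.

Lemma gauss_mgf (k c mu s : R) : s != 0 -> 0 < 1 - 2 * k * s^+2 ->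
  (\int[normal_prob mu s]_t (expR (k * (t - c)^+2))%:E =
  ((Num.sqrt (1 - 2 * k * s^+2))^-1 *
     expR (k * (mu - c)^+2 / (1 - 2 * k * s^+2)))%:E)%E.
Proof.
move=> s0 D0.
rewrite integral_normal; last 2 first.
- by move=> x; rewrite lee_fin expR_ge0.
- by apply/measurable_EFinP; exact: measurable_expsq.
under eq_integral do rewrite -EFinM (gauss_exp_id _ _ _ _ _ s0 D0) EFinM.
rewrite integralZl //; last exact: integrable_normal_pdf.
by rewrite integral_normal_pdf mule1.
Qed.
End S.


Section G.
Variable R : realType.
Local Open Scope ereal_scope.

Lemma le_integral_nm d (T : measurableType d) (mu : {measure set T -> \bar R})
  (f g : T -> \bar R) :
  (forall x, 0 <= f x) -> (forall x, f x <= g x) ->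
  \int[mu]_x f x <= \int[mu]_x g x.
Proof.
move=> f0 fg.
have g0 x : 0 <= g x by apply: le_trans (f0 x) (fg x).
rewrite !ge0_integralE // ?patch_setT //.
apply: ereal_sup_le => _ [h hf <-]; exists h => // x.
exact: le_trans (hf x) (fg x).
Qed.

Lemma gi_ge0 k (mu s : nat -> R) f x : (forall y, 0 <= f y) ->
  0 <= gauss_iter k mu s f x.
Proof.
move=> f0; elim: k x => [|k IH] x /=; first exact: f0.
by apply: integral_ge0 => t _; exact: IH.
Qed.

Lemma gi_mono k (mu s : nat -> R) f g x : (forall y, 0 <= f y) ->
  (forall y, f y <= g y) ->
  gauss_iter k mu s f x <= gauss_iter k mu s g x.
Proof.
move=> f0 fg; elim: k x => [|k IH] x /=; first exact: fg.
apply: le_integral_nm => t; first exact: gi_ge0.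
exact: IH.
Qed.

Lemma gi_prod k (mu s : nat -> R) (g : nat -> R -> R) (I : nat -> R)
    (h : (nat -> R) -> R) x :
  (forall j y, (0 <= g j y)%R) -> (forall j, measurable_fun setT (g j)) ->
  (forall j, (j < k)%N -> \int[normal_prob (mu j) (s j)]_t (g j t)%:E = (I j)%:E) ->
  (forall y j t, (j < k)%N -> h (upd y j t) = h y) -> (forall y, (0 <= h y)%R) ->
  gauss_iter k mu s (fun y => (h y * \prod_(j < k) g j (y j))%:E) x =
  (h x * \prod_(j < k) I j)%:E.
Proof.
elim: k h x => [|k IH] h x g0 mg gI hinv h0 /=.
  by rewrite !big_ord0.
have I0 j : (j < k.+1)%N -> (0 <= I j)%R.
  move=> jk; rewrite -lee_fin -(gI j jk); apply: integral_ge0 => t _.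
  by rewrite lee_fin.
under eq_integral => t _.
  rewrite (_ : (fun y => _) = (fun y => ((h y * g k (y k)) *
             \prod_(j < k) g j (y j))%:E)); last first.
    by apply: funext => y; rewrite big_ord_recr /=; congr (_%:E); ring.
  rewrite IH //; last first.
  - by move=> y; rewrite mulr_ge0.
  - move=> y j u jk; rewrite hinv ?(ltn_trans jk) //.
    by rewrite /upd (gtn_eqF jk).
  - by move=> j jk; apply: gI; apply: ltn_trans jk _.
  rewrite hinv // /upd eqxx mulrAC EFinM.
  over.
rewrite /= ge0_integralZl_EFin //; last 3 first.
- by move=> t _; rewrite lee_fin.
- by apply/measurable_EFinP; exact: mg.
- rewrite mulr_ge0 // prodr_ge0 // => j _; apply: I0; apply: ltn_trans (ltn_ord j) _.
  by [].
rewrite gI // -EFinM big_ord_recr /=; congr (_%:E); ring.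
Qed.
End G.


Section M.
Variable R : realType.
Variables (lam tau eta theta : nat -> R) (eps : R).
Hypothesis lam_neq0 : forall j, lam j != 0.
Hypothesis eps_gt0 : 0 < eps.
Hypothesis tau_gt0 : forall j, 0 < tau j.

Definition sg j := post_var lam tau eps j.
Definition bb j := sg j * lam j / eps.
Definition aa j := sg j / tau j * (eta j - theta j).
Definition vv j := sg j + sg j ^+ 2 * lam j ^+ 2 / eps.

Lemma sg_gt0 j : 0 < sg j.
Proof.
rewrite /sg /post_var invr_gt0 ltr_wpDl // ?invr_gt0 //.
by rewrite divr_ge0 // ?sqr_ge0 // ltW.
Qed.

Lemma sg_id j : sg j * (lam j ^+ 2 / eps + (tau j)^-1) = 1.
Proof.
rewrite /sg /post_var mulVf // gt_eqF // ltr_wpDl // ?invr_gt0 //.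
by rewrite divr_ge0 // ?sqr_ge0 // ltW.
Qed.

Lemma eps_n0 : eps != 0. Proof. by rewrite gt_eqF. Qed.

Lemma bb_n0 j : bb j != 0.
Proof.
have s0 := sg_gt0 j.
rewrite /bb; apply: mulf_neq0; last by rewrite invr_eq0 eps_n0.
by apply: mulf_neq0 => //; rewrite gt_eqF.
Qed.

Lemma vv_ge j : sg j <= vv j.
Proof.
rewrite /vv lerDl; apply: divr_ge0; last exact: ltW.
by rewrite mulr_ge0 // sqr_ge0.
Qed.

Lemma vv_le j : vv j <= 2 * sg j.
Proof.
have h := sg_id j.
have t0 : 0 <= sg j / tau j by rewrite divr_ge0 // ltW // sg_gt0.
have e : sg j ^+ 2 * lam j ^+ 2 / eps = sg j - sg j * (sg j / tau j).
  have h' : sg j * (lam j ^+ 2 / eps) = 1 - sg j / tau j by rewrite -h; ring.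
  transitivity (sg j * (sg j * (lam j ^+ 2 / eps))); first by ring.
  by rewrite h'; ring.
rewrite /vv e.
have := sg_gt0 j; nra.
Qed.

Lemma pm_id Y j : post_mean lam tau eta eps Y j - theta j =
  bb j * (Y j - (lam j * theta j - aa j / bb j)).
Proof.
have b0 := bb_n0 j.
have -> : bb j * (Y j - (lam j * theta j - aa j / bb j)) =
  bb j * Y j - bb j * (lam j * theta j) + aa j by field.
have h := sg_id j.
have ht : theta j = sg j * (lam j ^+ 2 / eps + (tau j)^-1) * theta j by rewrite h mul1r.
rewrite /post_mean {1}ht /bb /aa /sg.
ring.
Qed.

Lemma DD_id l j : 1 - 2 * l * sg j != 0 -> (1 - 2 * l * sg j) *
   (1 - 2 * (l * bb j ^+ 2 / (1 - 2 * l * sg j)) * Num.sqrt eps ^+ 2)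
   = 1 - 2 * l * vv j.
Proof.
move=> Dn0; rewrite sqr_sqrtr ?ltW // /bb /vv.
by field; rewrite Dn0 eps_n0.
Qed.

Lemma mgf_total (l h0 : R) m :
  (forall j, (j < m)%N -> 0 < 1 - 2 * l * sg j) ->
  (forall j, (j < m)%N -> 0 < 1 - 2 * l * vv j) -> 0 <= h0 ->
  gauss_iter m (fun j => lam j * theta j) (fun _ => Num.sqrt eps)
   (fun Y => gauss_iter m (post_mean lam tau eta eps Y)
      (fun j => Num.sqrt (post_var lam tau eps j))
      (fun x => (h0 * \prod_(j < m) expR (l * (x j - theta j) ^+ 2))%:E) (fun _ => 0))
   (fun _ => 0)
  = (h0 * \prod_(j < m) ((Num.sqrt (1 - 2 * l * vv j))^-1 *
         expR (l * aa j ^+ 2 / (1 - 2 * l * vv j))))%:E.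
Proof.
move=> D0 V0 h00.
pose D j := 1 - 2 * l * sg j.
pose kp j := l * bb j ^+ 2 / D j.
pose nu j := lam j * theta j - aa j / bb j.
have inner Y : gauss_iter m (post_mean lam tau eta eps Y)
      (fun j => Num.sqrt (post_var lam tau eps j))
      (fun x => (h0 * \prod_(j < m) expR (l * (x j - theta j) ^+ 2))%:E) (fun _ => 0)
   = (h0 * \prod_(j < m) ((Num.sqrt (D j))^-1 * expR (kp j * (Y j - nu j) ^+ 2)))%:E.
  etransitivity; first apply: (@gi_prod R m _ _
     (fun j t => expR (l * (t - theta j) ^+ 2))
     (fun j => (Num.sqrt (D j))^-1 * expR (kp j * (Y j - nu j) ^+ 2)) (fun _ => h0)).
  - by move=> j y; exact: expR_ge0.
  - by move=> j; exact: measurable_expsq.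
  - move=> j jm.
    have s0 : Num.sqrt (post_var lam tau eps j) != 0.
      by rewrite gt_eqF // sqrtr_gt0 sg_gt0.
    have ss : Num.sqrt (post_var lam tau eps j) ^+ 2 = sg j.
      by rewrite sqr_sqrtr // ltW // sg_gt0.
    rewrite gauss_mgf //; last by rewrite ss; exact: D0.
    rewrite ss pm_id -/(D j); congr ((_ * expR _)%:E).
    by rewrite /kp /nu; ring.
  - by move=> *.
  - by move=> *.
  - by [].
have -> : (fun Y => gauss_iter m (post_mean lam tau eta eps Y)
      (fun j => Num.sqrt (post_var lam tau eps j))
      (fun x => (h0 * \prod_(j < m) expR (l * (x j - theta j) ^+ 2))%:E) (fun _ => 0))
  = (fun Y => ((h0 * \prod_(j < m) (Num.sqrt (D j))^-1) *
        \prod_(j < m) expR (kp j * (Y j - nu j) ^+ 2))%:E).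
  by apply: funext => Y; rewrite inner big_split /= mulrA.
have Dp j : (j < m)%N -> 0 < 1 - 2 * kp j * Num.sqrt eps ^+ 2.
  move=> jm; have := V0 j jm; rewrite -(@DD_id l j (lt0r_neq0 (D0 j jm))) => h.
  by rewrite (pmulr_rgt0 _ (D0 j jm)) in h.
etransitivity; first apply: (@gi_prod R m _ _
     (fun j t => expR (kp j * (t - nu j) ^+ 2))
     (fun j => (Num.sqrt (1 - 2 * kp j * Num.sqrt eps ^+ 2))^-1 *
         expR (kp j * (lam j * theta j - nu j) ^+ 2 / (1 - 2 * kp j * Num.sqrt eps ^+ 2)))
     (fun _ => h0 * \prod_(j < m) (Num.sqrt (D j))^-1)).
- by move=> j y; exact: expR_ge0.
- by move=> j; exact: measurable_expsq.
- move=> j jm; rewrite gauss_mgf //; last exact: Dp.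
  by rewrite gt_eqF // sqrtr_gt0.
- by move=> *.
- move=> _; rewrite mulr_ge0 // prodr_ge0 // => j _.
rewrite /= -mulrA -big_split /=; congr ((h0 * _)%:E).
apply: eq_bigr => j _.
have Dj := D0 j (ltn_ord j); have Dpj := Dp j (ltn_ord j).
have hDD := @DD_id l j (lt0r_neq0 Dj).
rewrite -/(D j) -/(kp j) in hDD.
move: hDD Dpj; set B := 1 - 2 * kp j * Num.sqrt eps ^+ 2 => hDD Dpj.
rewrite -hDD sqrtrM ?ltW // invfM mulrA; congr (_ * expR _).
have b0 := bb_n0 j.
rewrite /nu /kp.
have -> : lam j * theta j - (lam j * theta j - aa j / bb j) = aa j / bb j by ring.
by field; rewrite b0 (gt_eqF Dj) (gt_eqF Dpj).
Qed.
End M.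


Section F.
Variable R : realType.

Lemma sqrtV_le_expR (a y : R) : 0 < a -> a^-1 <= expR y ^+ 2 ->
  (Num.sqrt a)^-1 <= expR y.
Proof.
move=> a0 h.
rewrite -(sqrtrV (ltW a0)).
have -> : expR y = Num.sqrt (expR y ^+ 2) by rewrite sqrtr_sqr ger0_norm ?expR_ge0.
by rewrite ler_sqrt // ?invr_ge0 ?ltW // sqr_ge0.
Qed.

Lemma expR_sq (y : R) : expR y ^+ 2 = expR (2 * y).
Proof. by rewrite expr2 -expRD mulr2n mulrDl mul1r. Qed.

Lemma L1 (u : R) : 0 <= u -> u <= 1/2 -> (Num.sqrt (1 - u))^-1 <= expR u.
Proof.
move=> u0 u1; apply: sqrtV_le_expR; first lra.
rewrite expR_sq.
apply: (@le_trans _ _ (1 + 2 * u)); last exact: expR_ge1Dx.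
rewrite -div1r ler_pdivrMr; last lra.
nra.
Qed.

Lemma L2 (u : R) : 0 <= u -> (Num.sqrt (1 + u))^-1 <= expR (- u / 2 + u ^+ 2 / 2).
Proof.
move=> u0; apply: sqrtV_le_expR; first lra.
rewrite expR_sq.
apply: (@le_trans _ _ (1 + (2 * (- u / 2 + u ^+ 2 / 2)))); last exact: expR_ge1Dx.
rewrite -div1r ler_pdivrMr; last lra.
have : 0 <= u ^+ 3 by rewrite exprn_ge0.
rewrite !expr2 !exprS expr0; nra.
Qed.
End F.

Section U.
Variable R : realType.

Lemma prod_le_expR m (F G : nat -> R) :
  (forall j, (j < m)%N -> 0 <= F j) -> (forall j, (j < m)%N -> F j <= expR (G j)) ->
  \prod_(j < m) F j <= expR (\sum_(j < m) G j).
Proof.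
move=> F0 FG; rewrite expR_sum; apply: ler_prod => j _.
by rewrite F0 // FG.
Qed.

Lemma upper_bound m (M : R) (sg v a : nat -> R) : (0 < m)%N -> 0 < M ->
  (forall j, (j < m)%N -> 0 < sg j <= M) ->
  (forall j, (j < m)%N -> sg j <= v j <= 2 * sg j) ->
  forall l, 0 < l -> l * M = 1 / 8 ->
  expR (- (l * (3 * (\sum_(j < m) sg j) + 3 / 2 * m%:R * M + 4 * (\sum_(j < m) a j ^+ 2)))) * \prod_(j < m) ((Num.sqrt (1 - 2 * l * v j))^-1 *
      expR (l * a j ^+ 2 / (1 - 2 * l * v j))) <= 2 * expR (- (m%:R / 36)).
Proof.
move=> m0 M0 hs hv l l0 lM.
set T := 3 * (\sum_(j < m) sg j) + 3 / 2 * m%:R * M + 4 * (\sum_(j < m) a j ^+ 2).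
have hu j : (j < m)%N -> 0 <= 2 * l * v j <= 1 / 2.
  move=> jm; have /andP[s0 sM] := hs j jm; have /andP[v1 v2] := hv j jm.
  have e : l * v j <= l * (2 * M) by rewrite ler_pM2l //; lra.
  have e0 : 0 <= l * v j by apply: mulr_ge0; lra.
  apply/andP; split; lra.
apply: (@le_trans _ _ (expR (- (l * T)) *
   expR (\sum_(j < m) (2 * l * v j + 2 * l * a j ^+ 2)))).
  rewrite ler_pM2l ?expR_gt0 //; apply: (@prod_le_expR m (fun j => (Num.sqrt (1 - 2 * l * v j))^-1 * expR (l * a j ^+ 2 / (1 - 2 * l * v j))) (fun j => 2 * l * v j + 2 * l * a j ^+ 2)) => j jm.
    by rewrite mulr_ge0 ?invr_ge0 ?sqrtr_ge0 ?expR_ge0.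
  have /andP[u0 u1] := hu j jm.
  rewrite expRD; apply: ler_pM.
  - by rewrite invr_ge0 sqrtr_ge0.
  - exact: expR_ge0.
  - exact: L1.
  - rewrite ler_expR ler_pdivrMr; last lra.
    have : 0 <= l * a j ^+ 2 by rewrite mulr_ge0 ?sqr_ge0 ?ltW.
    nra.
rewrite -expRD.
apply: (@le_trans _ _ (expR (- (m%:R / 36)))); last first.
  have := @expR_ge0 R (- (m%:R / 36)); lra.
rewrite ler_expR.
rewrite big_split /= -!mulr_sumr.
set Ss := \sum_(j < m) sg j.
set Sv := \sum_(j < m) v j.
set r := \sum_(j < m) a j ^+ 2.
have r0 : 0 <= r by rewrite sumr_ge0 // => j _; rewrite sqr_ge0.
have Svs : Sv <= 2 * Ss.
  rewrite /Sv /Ss mulr_sumr; apply: ler_sum => j _.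
  by have /andP[_ ->] := hv j (ltn_ord j).
have SsM : Ss <= m%:R * M.
  rewrite /Ss (@le_trans _ _ (\sum_(j < m) M)) //.
    by apply: ler_sum => j _; have /andP[_ ->] := hs j (ltn_ord j).
  by rewrite sumr_const card_ord mulr_natl.
have m0' : 0 <= m%:R :> R by rewrite ler0n.
have e1 : l * Ss <= l * (m%:R * M) by rewrite ler_pM2l.
have e2 : l * Sv <= l * (2 * Ss) by rewrite ler_pM2l.
have e3 : 0 <= l * r by rewrite mulr_ge0 // ltW.
have e4 : l * (m%:R * M) = m%:R / 8 by rewrite mulrCA lM; lra.
rewrite /T.
have -> : - (l * (3 * Ss + 3 / 2 * m%:R * M + 4 * r)) + (2 * l * Sv + 2 * l * r)
  = - 3 * (l * Ss) - 3 / 2 * (l * (m%:R * M)) - 2 * (l * r) + 2 * (l * Sv) by ring.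
lra.
Qed.
End U.

Section L.
Variable R : realType.

Lemma lower_bound m (M c : R) (sg v a : nat -> R) : 0 < M ->
  (forall j, (j < m)%N -> 0 < sg j <= M) ->
  (forall j, (j < m)%N -> sg j <= v j <= 2 * sg j) ->
  0 < c -> forall l, 0 < l -> l * M = c / 4 ->
  expR (l * (\sum_(j < m) sg j - 4 * c * (m%:R * M + \sum_(j < m) a j ^+ 2))) *
  \prod_(j < m) ((Num.sqrt (1 - 2 * (- l) * v j))^-1 *
      expR (- l * a j ^+ 2 / (1 - 2 * (- l) * v j)))
  <= 2 * expR (- (c ^+ 2 * m%:R / 2)).
Proof.
move=> M0 hs hv c0 l l0 lM.
pose G j := - (l * v j) + 2 * (l * v j) ^+ 2 - l * a j ^+ 2 + 2 * (l * v j) * (l * a j ^+ 2).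
apply: (@le_trans _ _ (expR (l * (\sum_(j < m) sg j - 4 * c * (m%:R * M + \sum_(j < m) a j ^+ 2))) *
   expR (\sum_(j < m) G j))).
  rewrite ler_pM2l ?expR_gt0 //.
  apply: (@prod_le_expR _ m (fun j => (Num.sqrt (1 - 2 * (- l) * v j))^-1 *
      expR (- l * a j ^+ 2 / (1 - 2 * (- l) * v j))) G) => j jm.
    by rewrite mulr_ge0 ?invr_ge0 ?sqrtr_ge0 ?expR_ge0.
  have /andP[s0 sM] := hs j jm; have /andP[v1 v2] := hv j jm.
  have lv0 : 0 <= l * v j by apply: mulr_ge0; lra.
  have la0 : 0 <= l * a j ^+ 2 by apply: mulr_ge0; [lra | exact: sqr_ge0].
  have -> : 1 - 2 * (- l) * v j = 1 + 2 * (l * v j) by ring.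
  rewrite /G -addrA expRD; apply: ler_pM.
  - by rewrite invr_ge0 sqrtr_ge0.
  - exact: expR_ge0.
  - have := @L2 R (2 * (l * v j)) (ltac:(lra)).
    by have -> : - (2 * (l * v j)) / 2 + (2 * (l * v j)) ^+ 2 / 2 =
       - (l * v j) + 2 * (l * v j) ^+ 2 by field.
  - rewrite ler_expR ler_pdivrMr; last lra.
    have -> : - l * a j ^+ 2 = - (l * a j ^+ 2) by ring.
    have : 0 <= (l * a j ^+ 2) * (l * v j) ^+ 2.
      by apply: mulr_ge0 => //; exact: sqr_ge0.
    nra.
rewrite -expRD.
apply: (@le_trans _ _ (expR (- (c ^+ 2 * m%:R / 2)))); last first.
  have := @expR_ge0 R (- (c ^+ 2 * m%:R / 2)); lra.
rewrite ler_expR.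
set Ss := \sum_(j < m) sg j.
set r := \sum_(j < m) a j ^+ 2.
have r0 : 0 <= r by rewrite sumr_ge0 // => j _; rewrite sqr_ge0.
have hG : \sum_(j < m) G j <=
    \sum_(j < m) (- (l * sg j) + 8 * (l * M) ^+ 2 - l * a j ^+ 2 + 4 * (l * M) * (l * a j ^+ 2)).
  apply: ler_sum => j _.
  have /andP[s0 sM] := hs j (ltn_ord j); have /andP[v1 v2] := hv j (ltn_ord j).
  have la0 : 0 <= l * a j ^+ 2 by apply: mulr_ge0; [lra | exact: sqr_ge0].
  have e1 : l * sg j <= l * v j by rewrite ler_pM2l.
  have e2 : l * v j <= 2 * (l * M).
    have : l * v j <= l * (2 * M) by rewrite ler_pM2l //; lra.
    lra.
  have e3 : 0 <= l * v j by apply: mulr_ge0; lra.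
  have e4 : (l * v j) ^+ 2 <= 4 * (l * M) ^+ 2.
    have -> : 4 * (l * M) ^+ 2 = (2 * (l * M)) ^+ 2 by ring.
    by rewrite ler_sqr ?nnegrE //; lra.
  have e5 : (l * v j) * (l * a j ^+ 2) <= 2 * (l * M) * (l * a j ^+ 2).
    by rewrite ler_wpM2r.
  rewrite /G; lra.
apply: (le_trans (lerD (lexx _) hG)).
have -> : \sum_(j < m) (- (l * sg j) + 8 * (l * M) ^+ 2 - l * a j ^+ 2 +
      4 * (l * M) * (l * a j ^+ 2)) =
    \sum_(j < m) ((- l) * sg j + 8 * (l * M) ^+ 2 + (4 * (l * M) * l - l) * a j ^+ 2).
  by apply: eq_bigr => j _; ring.
rewrite !big_split /= -!mulr_sumr sumr_const card_ord -/Ss -/r.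
have P0 : 0 <= l * r by apply: mulr_ge0 => //; lra.
rewrite -mulr_natr.
match goal with |- is_true (?L <= _) => have -> : L =
   - 4 * c * (l * M) * m%:R - 4 * c * (l * r) + 8 * (l * M) ^+ 2 * m%:R - l * r
   + 4 * (l * M) * (l * r) by ring end.
rewrite lM.
have -> : - 4 * c * (c / 4) * m%:R - 4 * c * (l * r) + 8 * (c / 4) ^+ 2 * m%:R - l * r
   + 4 * (c / 4) * (l * r) = - (c ^+ 2 * m%:R / 2) - 3 * (c * (l * r)) - l * r by field.
have : 0 <= c * (l * r) by apply: mulr_ge0 => //; lra.
lra.
Qed.
End L.


Section H.
Variable R : realType.

Lemma bias_fin (theta eta : nat -> R) m :
  (\sum_(0 <= j <oo) (((theta j - eta j) ^+ 2)%:E) < +oo)%E ->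
  exists b : R, 0 <= b /\ bias m theta eta = b%:E.
Proof.
move=> h.
have t0 : (0 <= bias m theta eta)%E.
  by apply: nneseries_ge0 => n _ _; rewrite lee_fin sqr_ge0.
have tf : (bias m theta eta < +oo)%E.
  apply: le_lt_trans h.
  rewrite (@nneseries_split _ _ 0 m); last by move=> k _; rewrite lee_fin sqr_ge0.
  rewrite add0n /bias; apply: leeDr.
  by rewrite sume_ge0 // => k _; rewrite lee_fin sqr_ge0.
exists (fine (bias m theta eta)); split; first by rewrite fine_ge0.
by rewrite fineK // ge0_fin_numE.
Qed.

Lemma sqdist_split m (eta theta x : nat -> R) :
  sqdist (sieve m eta x) theta =
  ((\sum_(j < m) (x j - theta j) ^+ 2)%:E + bias m theta eta)%E.
Proof.
rewrite /sqdist (@nneseries_split _ _ 0 m); last by move=> k _; rewrite lee_fin sqr_ge0.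
rewrite add0n /bias; congr (_ + _)%E.
  rewrite -sumEFin big_mkord; apply: eq_bigr => j _.
  by rewrite /sieve ltn_ord.
apply/congr_lim/funext => n; apply: eq_big_nat => i /andP[mi _].
by rewrite /sieve ltnNge mi /= -sqrrN opprB.
Qed.
Lemma le_bigmaxr n (F : 'I_n -> R) i : F i <= \big[Num.max/0]_(j < n) F j.
Proof.
have : i \in index_enum 'I_n by rewrite mem_index_enum.
elim: (index_enum _) => // a r IH; rewrite inE big_cons => /orP[/eqP<-|/IH h].
  by rewrite le_max lexx.
by rewrite le_max h orbT.
Qed.
End H.

Theorem mainTheorem2 (R : realType) (lam tau eta theta : nat -> R) (eps : R)
  (lam_bnd : exists M : R, forall j, `|lam j| <= M)
  (lam_neq0 : forall j, lam j != 0)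
  (eps_gt0 : 0 < eps) (eps_lt1 : eps < 1)
  (theta_l2 : (\sum_(0 <= j <oo) ((theta j ^+ 2)%:E) < +oo)%E)
  (diff_l2 : (\sum_(0 <= j <oo) (((theta j - eta j) ^+ 2)%:E) < +oo)%E)
  (tau_gt0 : forall j, 0 < tau j) :
  forall m : nat, (0 < m)%N ->
  (exp_post_prob m lam tau eta theta eps
     [set d | (bias m theta eta +
               (3 * sigma_bar m lam tau eps
                + 3 / 2 * m%:R * sigma_max m lam tau eps
                + 4 * r_m m lam tau eta theta eps)%:E < d)%E]
   <= (2 * expR (- (m%:R / 36)))%:E)%E
  /\
  forall c : R, 0 < c -> c < 1 / 5 ->
  (exp_post_prob m lam tau eta theta eps
     [set d | (d < bias m theta eta +
               (sigma_bar m lam tau eps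
                - 4 * c * (m%:R * sigma_max m lam tau eps
                           + r_m m lam tau eta theta eps))%:E)%E]
   <= (2 * expR (- (c ^+ 2 * m%:R / 2)))%:E)%E.
Proof.
move=> m m0.
have [b [b0 hb]] := @bias_fin R theta eta m diff_l2.
have sgp j : 0 < post_var lam tau eps j := @sg_gt0 R lam tau eps eps_gt0 tau_gt0 j.
set M := sigma_max m lam tau eps.
have sM j : (j < m)%N -> post_var lam tau eps j <= M.
  move=> jm; rewrite /M /sigma_max.
  exact: (@le_bigmaxr R m (fun i : 'I_m => post_var lam tau eps i) (Ordinal jm)).
have M0 : 0 < M by apply: lt_le_trans (sgp 0%N) (sM 0%N m0).
have hs j : (j < m)%N -> 0 < post_var lam tau eps j <= M.
  by move=> jm; rewrite sgp sM.
have hv j : (j < m)%N -> post_var lam tau eps j <= vv R lam tau eps j <= 2 * post_var lam tau eps j.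
  move=> _; apply/andP; split.
    exact: (@vv_ge R lam tau eps eps_gt0 j).
  exact: (@vv_le R lam tau eps eps_gt0 tau_gt0 j).
have rr : r_m m lam tau eta theta eps = \sum_(j < m) aa R lam tau eta theta eps j ^+ 2.
  by apply: eq_bigr => j _; rewrite /aa /sg !exprMn (exprVn (tau j)).
have ind0 A z : (0 <= ((\1_A z : R))%:E)%E by rewrite lee_fin indicE ler0n.
split.
- pose l := (8 * M)^-1.
  have l0 : 0 < l by rewrite invr_gt0 mulr_gt0.
  have lM : l * M = 1 / 8 by rewrite /l invfM -mulrA mulVf ?gt_eqF // mulr1 div1r.
  set T := 3 * sigma_bar m lam tau eps + 3 / 2 * m%:R * M + 4 * r_m m lam tau eta theta eps.
  apply: (@le_trans _ _ ((expR (- (l * T)) * \prod_(j < m)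
     ((Num.sqrt (1 - 2 * l * vv R lam tau eps j))^-1 *
       expR (l * aa R lam tau eta theta eps j ^+ 2 / (1 - 2 * l * vv R lam tau eps j))))%:E)).
    rewrite -(@mgf_total R lam tau eta theta eps lam_neq0 eps_gt0 tau_gt0 l); first last.
    + exact: expR_ge0.
    + move=> j jm; have /andP[v1 v2] := hv j jm; have /andP[s0 s1] := hs j jm.
      have : l * vv R lam tau eps j <= l * (2 * M) by rewrite ler_pM2l //; lra.
      lra.
    + move=> j jm; have /andP[s0 s1] := hs j jm.
      have : l * post_var lam tau eps j <= l * M by rewrite ler_pM2l.
      rewrite /sg; lra.
    apply: gi_mono => [Y|Y].
      by apply: gi_ge0.
    apply: gi_mono => x //.
    rewrite sqdist_split hb lee_fin -expR_sum -expRD indicE.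
    case: (boolP (_ \in _)) => [/set_mem /= h|_]; last by rewrite expR_ge0.
    rewrite -!EFinD lte_fin in h.
    rewrite -expR0 ler_expR -mulr_sumr.
    have : l * T <= l * \sum_(j < m) (x j - theta j) ^+ 2.
      by rewrite ler_pM2l //; apply: ltW; move: h; lra.
    lra.
  rewrite lee_fin /T rr /sigma_bar.
  exact: (@upper_bound R m M (fun j => post_var lam tau eps j) (vv R lam tau eps)
            (aa R lam tau eta theta eps) m0 M0 hs hv l l0 lM).
- move=> c c0 c1.
  pose l := c / (4 * M).
  have l0 : 0 < l by rewrite divr_gt0 // mulr_gt0.
  have lM : l * M = c / 4 by rewrite /l; field; rewrite gt_eqF.
  set T := sigma_bar m lam tau eps - 4 * c * (m%:R * M + r_m m lam tau eta theta eps).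
  apply: (@le_trans _ _ ((expR (l * T) * \prod_(j < m)
     ((Num.sqrt (1 - 2 * (- l) * vv R lam tau eps j))^-1 *
       expR (- l * aa R lam tau eta theta eps j ^+ 2 / (1 - 2 * (- l) * vv R lam tau eps j))))%:E)).
    rewrite -(@mgf_total R lam tau eta theta eps lam_neq0 eps_gt0 tau_gt0 (- l)); first last.
    + exact: expR_ge0.
    + move=> j jm; have /andP[v1 v2] := hv j jm; have /andP[s0 s1] := hs j jm.
      have : 0 <= l * vv R lam tau eps j by apply: mulr_ge0; lra.
      lra.
    + move=> j jm; have /andP[s0 s1] := hs j jm.
      have : 0 <= l * post_var lam tau eps j by apply: mulr_ge0; lra.
      rewrite /sg; lra.
    apply: gi_mono => [Y|Y].
      by apply: gi_ge0.
    apply: gi_mono => x //.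
    rewrite sqdist_split hb lee_fin -expR_sum -expRD indicE.
    case: (boolP (_ \in _)) => [/set_mem /= h|_]; last by rewrite expR_ge0.
    rewrite -!EFinD lte_fin in h.
    rewrite -expR0 ler_expR.
    have -> : \sum_(j < m) - l * (x j - theta j) ^+ 2 =
              - (l * \sum_(j < m) (x j - theta j) ^+ 2).
      by rewrite mulr_sumr -sumrN; apply: eq_bigr => j _; ring.
    have : l * \sum_(j < m) (x j - theta j) ^+ 2 <= l * T.
      by rewrite ler_pM2l //; apply: ltW; move: h; lra.
    lra.
  rewrite lee_fin /T rr /sigma_bar.
  exact: (@lower_bound R m M c (fun j => post_var lam tau eps j) (vv R lam tau eps)
            (aa R lam tau eta theta eps) M0 hs hv c0 l l0 lM).
Qed.
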